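(* Let $F=f+\Psi$ on $\mathbf{R}^n$, where $\Psi:\mathbf{R}^n\to\mathbf{R}\cup\{+\infty\}$ is proper, convex and closed, and $f$ is differentiable with $\|\nabla f(x)-\nabla f(y)\|_2\le L\|x-y\|_2$ for all $x,y\in\operatorname{dom}\Psi$, for some $L>0$. Let $F^\star=\min_xF(x)$ (assumed attained). Suppose $F$ satisfies the weak gradient-mapping dominance condition with parameter $\omega>0$: \[ \|G_L(x)\|_2\ge\sqrt{2\omega}\,\bigl(F(T_L(x))-F^\star\bigr)\qquad\forall x\in\operatorname{dom}\Psi. \] Then the proximal gradient method $x^{(k+1)}=T_L(x^{(k)})$, started from any $x^{(0)}\in\operatorname{dom}\Psi$, satisfies for all $k\ge0$ \[ F(x^{(k)})-F^\star\le\max\Bigl\{\frac{4L}{\omega k},\ \Bigl(\frac{\sqrt2}{2}\Bigr)^k\bigl(F(x^{(0)})-F^\star\bigr)\Bigr\}, \] where $\frac{4L}{\omega k}$ is interpreted as $+\infty$ for $k=0$.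
   Context: For a convex function $\phi$, $\operatorname{prox}_\phi(x)=\arg\min_y\{\phi(y)+\tfrac12\|y-x\|_2^2\}$. Define $T_L(x)=\operatorname{prox}_{\frac1L\Psi}\bigl(x-\frac1L\nabla f(x)\bigr)$ and the gradient mapping $G_L(x)=L\bigl(x-T_L(x)\bigr)$. The proximal gradient method with constant step size $1/L$ is $x^{(k+1)}=T_L(x^{(k)})$. *)

(* Defs.v *)
From HB Require Import structures.
From mathcomp Require Import all_boot all_order all_algebra.
From mathcomp Require Import all_classical all_reals all_analysis.
Set Implicit Arguments. Unset Strict Implicit. Unset Printing Implicit Defensive.
Import Order.TTheory GRing.Theory Num.Theory.
Import numFieldNormedType.Exports.
Local Open Scope classical_set_scope.
Local Open Scope ring_scope.

Section Defs.
Context {R : realType} {n : nat}.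

Definition dotv (x y : 'rV[R]_n) : R := \sum_(i < n) x 0 i * y 0 i.
Definition norm2 (x : 'rV[R]_n) : R := Num.sqrt (\sum_(i < n) (x 0 i) ^+ 2).

Definition dom (phi : 'rV[R]_n -> \bar R) : set 'rV[R]_n :=
  [set x | (phi x < +oo)%E].

Definition proper_fun (phi : 'rV[R]_n -> \bar R) : Prop :=
  (forall x, (-oo < phi x)%E) /\ (exists x, (phi x < +oo)%E).

Definition convex_fun (phi : 'rV[R]_n -> \bar R) : Prop :=
  forall (x y : 'rV[R]_n) (t : R), 0 < t < 1 ->
    (phi (t *: x + (1 - t) *: y)%R <= t%:E * phi x + (1 - t)%:E * phi y)%E.

(* closed = lower semicontinuous = all sublevel sets closed *)
Definition closed_fun (phi : 'rV[R]_n -> \bar R) : Prop :=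
  forall a : R, closed [set x | (phi x <= a%:E)%E].

(* y = prox_phi(x), i.e. y minimizes phi(y) + 1/2 ||y - x||_2^2
   (the minimizer is unique when phi is proper convex closed) *)
Definition is_prox (phi : 'rV[R]_n -> \bar R) (x y : 'rV[R]_n) : Prop :=
  forall z, (phi y + (2^-1 * norm2 (y - x) ^+ 2)%:E
              <= phi z + (2^-1 * norm2 (z - x) ^+ 2)%:E)%E.

Definition is_TL (Psi : 'rV[R]_n -> \bar R) (gradf : 'rV[R]_n -> 'rV[R]_n)
  (L : R) (x y : 'rV[R]_n) : Prop :=
  is_prox (fun z => (L^-1)%:E * Psi z)%E (x - L^-1 *: gradf x)%R y.

Definition GL (L : R) (x Tx : 'rV[R]_n) : 'rV[R]_n := L *: (x - Tx).

End Defs.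

(* Main.v *)
Require Import Defs.
From HB Require Import structures.
From mathcomp Require Import all_boot all_order all_algebra.
From mathcomp Require Import all_classical all_reals all_analysis.
From mathcomp Require Import ring lra zify.
Import Order.TTheory GRing.Theory Num.Theory.
Import numFieldNormedType.Exports.
Local Open Scope classical_set_scope.
Local Open Scope ring_scope.

Lemma line_quot (R : realType) (V : normedModType R) (f : V -> R^o) x d t :
  (fun h : R => h^-1 *: (((fun s : R => f (x + s *: d)) \o shift t) (h *: (1:R)) - f (x + t *: d)))
  = (fun h : R => h^-1 *: ((f \o shift (x + t *: d)) (h *: d) - f (x + t *: d))).
Proof.
apply/funext => h /=; congr (_ *: (_ - _)); congr f.
by rewrite /shift [h%:A]mulr1 scalerDl addrCA addrA.
Qed.

Lemma line_is_derive (R : realType) (V : normedModType R) (f : V -> R^o) x d t :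
  differentiable f (x + t *: d) ->
  is_derive t (1:R) (fun s : R => f (x + s *: d)) ('d f (x + t *: d) d).
Proof.
move=> df; apply: DeriveDef.
  by rewrite /derivable line_quot; apply: diff_derivable.
by rewrite /derive line_quot -deriveE.
Qed.


Lemma rate_inv (R : realType) (r : nat -> R) (c : R) : 0 < c -> (forall k, 0 <= r k) ->
  (forall k, r k.+1 + c * r k.+1 ^+ 2 <= r k) ->
  forall k, exists A B : nat, (A + B = k)%N /\ r k <= (2^-1) ^+ B * r 0 /\ A%:R * c * r k <= 2.
Proof.
move=> hc hr hs; elim=> [|k [A [B [hAB [h1 h2]]]]].
  by exists 0%N, 0%N; rewrite expr0 mul1r mul0r mul0r.
have r0 := hr k; have r1 := hr k.+1; have hk := hs k.
have hA : 0 <= A%:R :> R by [].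
have hr1 : r k.+1 <= r k by nra.
case: (leP (r k) (2 * r k.+1)) => hlt.
- exists A.+1, B; split; first by rewrite addSn hAB.
  split; first exact: le_trans h1.
  rewrite -addn1 natrD mulrDl mul1r.
  have e1 : A%:R * c * r k * r k.+1 <= 2 * r k.+1 by rewrite ler_wpM2r.
  have e2 : c * r k * r k.+1 <= 2 * (r k - r k.+1).
    have : c * r k * r k.+1 <= c * (2 * r k.+1) * r k.+1.
      by rewrite ler_wpM2r // ler_wpM2l // ltW.
    nra.
  have e3 : (A%:R * c + c) * r k.+1 * r k <= 2 * r k by nra.
  case: (ltrgt0P (r k)) => hrk; last first.
  + have : r k.+1 = 0 by lra.
    by move=> ->; rewrite mulr0.
  + lra.
  + by rewrite -(ler_pM2r hrk).
- exists A, B.+1; split; first by rewrite addnS hAB.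
  split.
    rewrite exprS -mulrA.
    have : r k.+1 <= 2^-1 * r k by lra.
    move=> /le_trans; apply; rewrite ler_pM2l //; lra.
  apply: le_trans h2; apply: ler_wpM2l => //; exact: mulr_ge0 (ltW hc).
Qed.


Lemma rate_final (R : realType) (r : nat -> R) (c : R) (k : nat) :
  0 < c -> 0 <= r 0 -> 0 <= r k -> (0 < k)%N ->
  (exists A B : nat, (A + B = k)%N /\ r k <= (2^-1) ^+ B * r 0 /\ A%:R * c * r k <= 2) ->
  r k <= 4 / (c * k%:R) \/ r k <= (Num.sqrt 2 / 2) ^+ k * r 0.
Proof.
move=> hc hr0 hrk hk [A [B [hAB [h1 h2]]]].
case: (leqP k (2 * A)) => hkA.
- left.
  have hk' : 0 < k%:R :> R by rewrite ltr0n.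
  rewrite ler_pdivlMr ?mulr_gt0 //.
  have hkA' : k%:R <= 2 * A%:R :> R by rewrite -natrM ler_nat.
  have : r k * (c * k%:R) <= r k * (c * (2 * A%:R)).
    by rewrite ler_wpM2l // ler_wpM2l // ltW.
  nra.
- right.
  have hkB : (k <= 2 * B)%N by lia.
  apply: (le_trans h1); apply: ler_wpM2r => //.
  have s2 : Num.sqrt 2 ^+ 2 = 2 :> R by rewrite sqr_sqrtr.
  have s0 : 0 <= Num.sqrt 2 :> R by exact: sqrtr_ge0.
  have E : (2^-1 : R) ^+ B = (Num.sqrt 2 / 2) ^+ (2 * B).
    by rewrite exprM expr_div_n s2; congr (_ ^+ _); field.
  rewrite E.
  have hx0 : 0 <= Num.sqrt 2 / 2 :> R by rewrite divr_ge0.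
  have hx1 : Num.sqrt 2 / 2 <= 1 :> R by rewrite ler_pdivrMr //; nra.
  exact: (ler_wiXn2l hx0 hx1 hkB).
Qed.

Section H.
Context {R : realType} {n : nat}.
Implicit Types a b d x y v : 'rV[R]_n.

Definition sq (v : 'rV[R]_n) : R := \sum_(i < n) (v 0 i) ^+ 2.

Lemma sq_ge0 v : 0 <= sq v.
Proof. by apply: sumr_ge0 => i _; exact: sqr_ge0. Qed.

Lemma norm2E v : norm2 v ^+ 2 = sq v.
Proof. by rewrite /norm2 sqr_sqrtr // sq_ge0. Qed.

Lemma norm2_ge0 v : 0 <= norm2 v.
Proof. exact: sqrtr_ge0. Qed.

Lemma dotvB a b d : dotv (a - b) d = dotv a d - dotv b d.
Proof. by rewrite /dotv -sumrB; apply: eq_bigr => i _; rewrite !mxE; ring. Qed.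

Lemma dot_le a d (lam : R) : 2 * lam * dotv a d <= sq a + lam ^+ 2 * sq d.
Proof.
have H : 0 <= \sum_(i < n) ((a 0 i) ^+ 2 + lam ^+ 2 * (d 0 i) ^+ 2 - 2 * lam * (a 0 i * d 0 i)).
  apply: sumr_ge0 => i _.
  have -> : (a 0 i) ^+ 2 + lam ^+ 2 * (d 0 i) ^+ 2 - 2 * lam * (a 0 i * d 0 i)
           = (a 0 i - lam * d 0 i) ^+ 2 by ring.
  exact: sqr_ge0.
move: H; rewrite sumrB big_split /= -!mulr_sumr -/(sq a) -/(sq d) -/(dotv a d).
by rewrite subr_ge0.
Qed.


Lemma descent (f : 'rV[R]_n -> R) (gradf : 'rV[R]_n -> 'rV[R]_n) (L : R) x y :
  (forall z, differentiable f z /\ forall v, 'd f z v = dotv (gradf z) v) -> 0 < L ->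
  (forall t, 0 < t < 1 -> sq (gradf (x + t *: (y - x)) - gradf x) <= L ^+ 2 * t ^+ 2 * sq (y - x)) ->
  f y <= f x + dotv (gradf x) (y - x) + L / 2 * sq (y - x).
Proof.
move=> hdiff hL hlip.
set d := y - x; set D0 := dotv (gradf x) d; set N := sq d.
pose g := fun s : R => f (x + s *: d).
pose dg := fun s : R => dotv (gradf (x + s *: d)) d.
have hg : forall s : R, is_derive s (1:R) g (dg s).
  move=> s; have := @line_is_derive R _ f x d s (hdiff (x + s *: d)).1.
  by rewrite (hdiff _).2.
pose h := g - (fun s => s * D0) - (fun s => (L / 2 * N) * s ^+ 2).
have hh : forall s : R, is_derive s (1:R) h (dg s - D0 - (L / 2 * N) * (2 * s)).
  move=> s.
  have H1 : is_derive s (1:R) (fun s0 : R => s0 * D0) D0.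
    have H : is_derive s (1:R) (id * cst D0 : R -> R) (id s *: 0 + cst D0 s *: 1) by exact: is_deriveM.
    by rewrite /= scaler0 add0r [D0 *: 1]mulr1 in H.
  have H2 : is_derive s (1:R) (fun s0 : R => (L / 2 * N) * s0 ^+ 2) ((L / 2 * N) * (2 * s)).
    have H : is_derive s (1:R) ((L / 2 * N) \*: (id ^+ 2) : R -> R) ((L / 2 * N) *: ((2%:R * id s ^+ 1) *: 1)) by exact: is_deriveZ.
    by rewrite /= expr1 [_ *: 1]mulr1 in H.
  exact: is_deriveB.
have [c c01 hc] : exists2 c, c \in `]0, 1[%R & h 1 - h 0 = (dg c - D0 - (L / 2 * N) * (2 * c)) * (1 - 0).
  apply: MVT => //.
  apply: derivable_within_continuous => s hs.
  exact: (@ex_derive _ _ _ _ _ _ _ (hh s)).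
move: c01; rewrite in_itv /= => /andP [c0 c1].
have hdc : dg c - D0 <= L * c * N.
  rewrite /dg /D0 -dotvB.
  have H1 := hlip c (andb_true_intro (conj c0 c1)).
  have H2 := dot_le (gradf (x + c *: d) - gradf x) d (L * c).
  have hN : 0 <= N := sq_ge0 d.
  have hLc : 0 < L * c by exact: mulr_gt0.
  set D := dotv _ d in H2 *.
  set A := sq _ in H1 H2.
  rewrite -/N in H1 H2.
  have E1 : (L * c) ^+ 2 * N = L ^+ 2 * c ^+ 2 * N by ring.
  have E2 : 2 * (L * c) * (L * c * N) = 2 * (L ^+ 2 * c ^+ 2 * N) by ring.
  have : 2 * (L * c) * D <= 2 * (L * c) * (L * c * N).
    rewrite E2; lra.
  by rewrite ler_pM2l // mulr_gt0.
have Ey : x + 1 *: d = y by rewrite scale1r /d addrC subrK.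
move: hc; rewrite /h /g !fctE /= Ey scale0r addr0.
rewrite expr1n expr0n /= !mulr0 !mul0r !subr0 !mulr1 mul1r => hc.
have hdc2 : L / 2 * N * (2 * c) = L * c * N by field.
rewrite hdc2 in hc.
have : dg c - D0 - L * c * N <= 0 by lra.
lra.
Qed.


Lemma sq_lin x y u (t : R) :
  sq (t *: x + (1 - t) *: y - u) = sq (y - u) + (2 * t) * dotv (y - u) (x - y) + t ^+ 2 * sq (x - y).
Proof.
rewrite /sq /dotv !mulr_sumr -!big_split /=; apply: eq_bigr => i _; rewrite !mxE; ring.
Qed.

Lemma dot_prox x y g (L : R) : L != 0 ->
  L * dotv (y - (x - L^-1 *: g)) (x - y) = (- L) * sq (y - x) - dotv g (y - x).
Proof.
move=> hL; rewrite /sq /dotv !mulr_sumr -sumrB; apply: eq_bigr => i _; rewrite !mxE.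
by field.
Qed.

Lemma small_t {q p A B : R} : 0 <= B -> (forall t, 0 < t < 1 -> q <= p + A + t * B) -> q <= p + A.
Proof.
move=> hB H; rewrite leNgt; apply/negP => hlt.
set e := q - (p + A).
have he : 0 < e by rewrite /e subr_gt0.
set t := e / (2 * (B + e)).
have hBe : 0 < B + e by lra.
have t0 : 0 < t by rewrite /t divr_gt0 // mulr_gt0.
have tB : t * (2 * (B + e)) = e by rewrite /t mulfVK // gt_eqF // mulr_gt0.
have t1 : t < 1 by nra.
have te : 0 < t * e by exact: mulr_gt0.
have E : 2 * (t * B) = t * (2 * (B + e)) - 2 * (t * e) by ring.
rewrite tB in E.
have := H t (andb_true_intro (conj t0 t1)).
rewrite /e in E te; lra.
Qed.


Lemma prox_step (Psi : 'rV[R]_n -> \bar R) (g : 'rV[R]_n) (L p : R) x y :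
  0 < L -> proper_fun Psi -> convex_fun Psi -> Psi x = p%:E ->
  is_prox (fun z => (L^-1)%:E * Psi z)%E (x - L^-1 *: g) y ->
  exists q, Psi y = q%:E /\ q + dotv g (y - x) + L * sq (y - x) <= p.
Proof.
move=> hL [hm _] hc hx hp.
set u := x - L^-1 *: g.
have hy := hp x; rewrite hx in hy.
have hLi : 0 < L^-1 by rewrite invr_gt0.
case E: (Psi y) => [q| |]; rewrite E in hy; last 2 first.
- by move: hy; rewrite muleC gt0_mulye ?lte_fin // addye // -!EFinM -EFinD leye_eq.
- by have := hm y; rewrite E.
exists q; split => //.
have key : forall t, 0 < t < 1 ->
    q <= p + L * dotv (y - u) (x - y) + t * (L / 2 * sq (x - y)).
  move=> t ht.
  set zt := t *: x + (1 - t) *: y.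
  have hz := hc x y t ht; rewrite hx E -/zt in hz.
  have hzp := hp zt.
  rewrite E in hzp.
  case Ez: (Psi zt) => [w| |]; rewrite Ez in hz hzp; last 2 first.
  - by move: hz; rewrite -!EFinM -EFinD leye_eq.
  - by have := hm zt; rewrite Ez.
  move: hz hzp; rewrite -!EFinM -!EFinD !lee_fin !norm2E sq_lin => hz hzp.
  rewrite -/u in hzp.
  set D := dotv (y - u) (x - y) in hzp *; set Q := sq (x - y) in hzp *; set S0 := sq (y - u) in hzp.
  have hL0 : L != 0 by rewrite gt_eqF.
  have h1 : q <= w + L * t * D + L * t ^+ 2 * Q / 2.
    have := hzp; rewrite -(ler_pM2l hL).
    have -> : L * (L^-1 * q + 2^-1 * S0) = q + L * S0 / 2 by field.
    have -> : L * (L^-1 * w + 2^-1 * (S0 + 2 * t * D + t ^+ 2 * Q)) =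
              w + L * S0 / 2 + L * t * D + L * t ^+ 2 * Q / 2 by field.
    lra.
  have h2 : t * (q - (p + L * D + t * (L / 2 * Q))) <= 0.
    have -> : t * (q - (p + L * D + t * (L / 2 * Q))) = t * q - t * p - L * t * D - L * t ^+ 2 * Q / 2 by field.
    lra.
  have t0 : 0 < t by case/andP: ht.
  by rewrite -subr_le0 -(pmulr_rle0 _ t0).
have hB : 0 <= L / 2 * sq (x - y) by rewrite mulr_ge0 ?sq_ge0 // divr_ge0 // ltW.
have := small_t hB key.
rewrite /u dot_prox ?gt_eqF //; lra.
Qed.


Lemma sq_seg x y (t : R) : sq (x + t *: (y - x) - x) = t ^+ 2 * sq (y - x).
Proof. by rewrite /sq !mulr_sumr; apply: eq_bigr => i _; rewrite !mxE; ring. Qed.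

Lemma sq_GL x y (L : R) : sq (L *: (x - y)) = L ^+ 2 * sq (y - x).
Proof. by rewrite /sq !mulr_sumr; apply: eq_bigr => i _; rewrite !mxE; ring. Qed.

Lemma seg_eq x y (t : R) : t *: y + (1 - t) *: x = x + t *: (y - x).
Proof. by apply/matrixP => i j; rewrite !mxE; ring. Qed.

End H.

Theorem theorem4 (R : realType) (n : nat)
  (f : 'rV[R]_n -> R) (gradf : 'rV[R]_n -> 'rV[R]_n)
  (Psi : 'rV[R]_n -> \bar R) (L omega Fstar : R)
  (hL : 0 < L) (homega : 0 < omega)
  (hdiff : forall x, differentiable f x /\ forall v, 'd f x v = dotv (gradf x) v)
  (hlip : forall x y, x \in dom Psi -> y \in dom Psi ->
            norm2 (gradf x - gradf y) <= L * norm2 (x - y))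
  (hproper : proper_fun Psi) (hconvex : convex_fun Psi) (hclosed : closed_fun Psi)
  (hFstar_att : exists xs, ((f xs)%:E + Psi xs = Fstar%:E)%E)
  (hFstar_min : forall x, (Fstar%:E <= (f x)%:E + Psi x)%E)
  (hdom : forall x y, x \in dom Psi -> is_TL Psi gradf L x y ->
     ((Num.sqrt (2 * omega))%:E * ((f y)%:E + Psi y - Fstar%:E)
        <= (norm2 (GL L x y))%:E)%E)
  (xk : nat -> 'rV[R]_n)
  (hx0 : xk 0%N \in dom Psi)
  (hstep : forall k, is_TL Psi gradf L (xk k) (xk k.+1)) :
  forall k : nat,
    ((f (xk k))%:E + Psi (xk k) - Fstar%:E
      <= maxe (if k == 0%N then +oo else (4 * L / (omega * k%:R))%:E)
              (((Num.sqrt 2 / 2) ^+ k)%:E * ((f (xk 0%N))%:E + Psi (xk 0%N) - Fstar%:E)))%E.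
Proof.
have hm := hproper.1.
have fin : forall k, exists p, Psi (xk k) = p%:E.
  elim=> [|k [p hp]].
  - move: hx0; rewrite inE /dom /=.
    case E: (Psi (xk 0%N)) => [p| |] //; first by exists p.
    by have := hm (xk 0%N); rewrite E.
  - have [q [hq _]] := @prox_step R n Psi (gradf (xk k)) L p (xk k) (xk k.+1) hL hproper hconvex hp (hstep k).
    by exists q.
pose P k := fine (Psi (xk k)).
have HP : forall k, Psi (xk k) = (P k)%:E.
  by move=> k; case: (fin k) => p hp; rewrite /P hp.
have indom : forall k, xk k \in dom Psi.
  by move=> k; rewrite inE /dom /= HP ltry.
pose r k := f (xk k) + P k - Fstar.
have r_ge0 : forall k, 0 <= r k.
  move=> k; have := hFstar_min (xk k); rewrite HP -EFinD lee_fin /r => h; lra.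
have hLi : 0 < L^-1 by rewrite invr_gt0.
have step : forall k, r k.+1 + (omega / L) * r k.+1 ^+ 2 <= r k.
  move=> k.
  set x := xk k; set y := xk k.+1.
  have [q [hq hpx]] := @prox_step R n Psi (gradf x) L (P k) x y hL hproper hconvex (HP k) (hstep k).
  have hqP : q = P k.+1 by move: hq; rewrite HP => -[->].
  rewrite hqP in hpx.
  have hseg : forall t, 0 < t < 1 -> sq (gradf (x + t *: (y - x)) - gradf x) <= L ^+ 2 * t ^+ 2 * sq (y - x).
    move=> t ht.
    have zdom : x + t *: (y - x) \in dom Psi.
      have := hconvex y x t ht; rewrite seg_eq /x /y !HP -!EFinM -EFinD => hz.
      by rewrite inE /dom /=; apply: (le_lt_trans hz); rewrite ltry.
    have := hlip _ _ zdom (indom k).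
    rewrite -/x => hl.
    have hn0 := norm2_ge0 (gradf (x + t *: (y - x)) - gradf x).
    have hn1 := norm2_ge0 (x + t *: (y - x) - x).
    have : norm2 (gradf (x + t *: (y - x)) - gradf x) ^+ 2 <= (L * norm2 (x + t *: (y - x) - x)) ^+ 2.
      by rewrite ler_pXn2r // ?nnegrE // mulr_ge0 // ltW.
    by rewrite exprMn !norm2E sq_seg mulrA.
  have hdesc := @descent R n f gradf L x y hdiff hL hseg.
  have hd := hdom _ _ (indom k) (hstep k).
  rewrite hq hqP -EFinN -!EFinD -EFinM lee_fin in hd.
  have hr1 := r_ge0 k.+1.
  have hs0 : 0 <= Num.sqrt (2 * omega) by exact: sqrtr_ge0.
  have hsq : (Num.sqrt (2 * omega) * r k.+1) ^+ 2 <= norm2 (GL L x y) ^+ 2.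
    by rewrite ler_pXn2r // ?nnegrE ?mulr_ge0 ?norm2_ge0.
  have h2o : 0 <= 2 * omega by rewrite mulr_ge0 // ltW.
  rewrite exprMn (sqr_sqrtr h2o) norm2E /GL sq_GL in hsq.
  have hc : omega / L * r k.+1 ^+ 2 <= L / 2 * sq (y - x).
    rewrite -(ler_pM2l hL).
    have -> : L * (omega / L * r k.+1 ^+ 2) = (2 * omega * r k.+1 ^+ 2) / 2 by field; rewrite gt_eqF.
    have -> : L * (L / 2 * sq (y - x)) = (L ^+ 2 * sq (y - x)) / 2 by field.
    lra.
  move: hc; rewrite /r -/x -/y => hc; lra.
have hcL : 0 < omega / L by rewrite divr_gt0.
have inv := @rate_inv R r (omega / L) hcL r_ge0 step.
move=> k.
have E : forall j, ((f (xk j))%:E + Psi (xk j) - Fstar%:E)%E = (r j)%:E.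
  by move=> j; rewrite HP -EFinN -!EFinD.
rewrite !E.
case: (eqVneq k 0%N) => [->|hk].
  by rewrite /= le_max leey.
rewrite -EFinM le_max !lee_fin.
have hk0 : (0 < k)%N by rewrite lt0n.
have [h|h] := @rate_final R r (omega / L) k hcL (r_ge0 0%N) (r_ge0 k) hk0 (inv k).
- apply/orP; left; apply: (le_trans h).
  have -> : 4 / (omega / L * k%:R) = 4 * L / (omega * k%:R).
    by field; rewrite pnatr_eq0 hk !gt_eqF.
  exact: lexx.
- by apply/orP; right.
Qed.
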